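(* Let $p\in(0,1)$, $d\ge2$ an integer, and $\psi(v)=-\frac{p}{d-p}\ln(v)-\ln(1+pv)$, so that $\mathrm{Re}\,\psi(v)=-\frac{p}{d-p}\ln|v|-\ln|1+pv|$. For each $v$ write the $d$ roots (with multiplicity) of $u(1+u)^{d-1}=v(1+v)^{d-1}$ as $v,u_1(v),\dots,u_{d-1}(v)$, where $u_1$ is the non-trivial solution with $u_1(-1/d)=-1/d$ and $u_2(v),\dots,u_{d-1}(v)$ are the other non-trivial solutions. Then there exists a path $\Gamma_0$ encircling the origin and passing through $v=-1/d$ such that $$\mathrm{Re}\,\psi(v)-\mathrm{Re}\,\psi(u_i(v))<0$$ for all $v\in\Gamma_0$ and $i=1,\dots,d-1$, except for the solution $u_1(v)$ at the point $v=-1/d$. *)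

(* Defs.v *)
From Stdlib Require Import Reals List.
From Coquelicot Require Import Coquelicot.
Open Scope R_scope.

Fixpoint Cpow (z : C) (n : nat) : C :=
  match n with
  | O => RtoC 1
  | S k => Cmult z (Cpow z k)
  end.

Definition fpoly (d : nat) (u : C) : C :=
  Cmult u (Cpow (Cplus (RtoC 1) u) (d - 1)).

(* Re psi(v) = -(p/(d-p)) ln|v| - ln|1+pv|, as an extended real:
   it equals +oo exactly at the singularities v = 0 and v = -1/p
   (where both log terms tend to +oo). *)
Definition RePsi (p : R) (d : nat) (v : C) : Rbar :=
  match Req_EM_T (Cmod v * Cmod (Cplus (RtoC 1) (Cmult (RtoC p) v))) 0 with
  | left _ => p_infty
  | right _ =>
      Finite (- (p / (INR d - p)) * ln (Cmod v)
              - ln (Cmod (Cplus (RtoC 1) (Cmult (RtoC p) v))))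
  end.

(* us is the list (with multiplicity) of the d-1 non-trivial roots u of
   u(1+u)^(d-1) = v(1+v)^(d-1), i.e. f(u) - f(v) = (u - v) * prod_i (u - us_i). *)
Definition nontrivial_roots (d : nat) (v : C) (us : list C) : Prop :=
  length us = (d - 1)%nat /\
  forall u : C,
    Cminus (fpoly d u) (fpoly d v)
    = Cmult (Cminus u v) (fold_right Cmult (RtoC 1) (map (fun w => Cminus u w) us)).

Definition polar_pt (r th : R -> R) (t : R) : C :=
  (r t * cos (th t), r t * sin (th t)).

(* A simple closed continuous curve t in [0,1] |-> r(t) e^{i theta(t)}, with
   r > 0 and continuous lift theta of the argument, winding once (positively)
   around the origin. *)
Definition encircling_origin (r th : R -> R) : Prop :=
  (forall t, 0 <= t <= 1 -> continuous r t /\ continuous th t /\ 0 < r t) /\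
  r 1 = r 0 /\ th 1 = th 0 + 2 * PI /\
  (forall s t, 0 <= s < 1 -> 0 <= t < 1 -> polar_pt r th s = polar_pt r th t -> s = t).

(* Main.v *)
Require Import Defs.
From Stdlib Require Import Reals List.
From Coquelicot Require Import Coquelicot.
Open Scope R_scope.
From Stdlib Require Import Lra Lia Classical.

Lemma cos_half_sq (x : R) : cos x = 1 - 2 * sin (x/2) ^ 2.
Proof. replace x with (2 * (x/2)) at 1 by field. rewrite cos_2a_sin. ring. Qed.

Lemma cos_lt_1_pos (x : R) : 0 < x < 2 * PI -> cos x < 1.
Proof.
  intros H. rewrite cos_half_sq. assert (0 < sin (x/2)) by (apply sin_gt_0; lra). nra.
Qed.

Lemma cos_eq_1_small (x : R) : - (2*PI) < x < 2 * PI -> cos x = 1 -> x = 0.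
Proof.
  intros H Hc. destruct (Rtotal_order x 0) as [Hx|[Hx|Hx]]; auto.
  - assert (cos (-x) < 1) by (apply cos_lt_1_pos; lra). rewrite cos_neg in H0. lra.
  - assert (cos x < 1) by (apply cos_lt_1_pos; lra). lra.
Qed.

Lemma cos_sin_eq (a b : R) : cos a = cos b -> sin a = sin b ->
  exists k : Z, a = b + 2 * IZR k * PI.
Proof.
  intros Hc Hs.
  assert (H1 : cos (a - b) = 1).
  { rewrite cos_minus, Hc, Hs. pose proof (sin2_cos2 b). unfold Rsqr in H. lra. }
  rewrite cos_half_sq in H1.
  assert (H2 : sin ((a-b)/2) = 0) by nra.
  destruct (sin_eq_0_0 _ H2) as [k Hk]. exists k. lra.
Qed.

Lemma sin_2kPI (k : Z) : sin (2 * IZR k * PI) = 0.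
Proof. apply sin_eq_0_1. exists (2*k)%Z. rewrite mult_IZR. simpl. ring. Qed.

Lemma cos_2kPI (k : Z) : cos (2 * IZR k * PI) = 1.
Proof.
  rewrite cos_half_sq. replace (2 * IZR k * PI / 2) with (IZR k * PI) by field.
  rewrite sin_eq_0_1 by (exists k; reflexivity). ring.
Qed.

Lemma cos_perZ (y : R) (k : Z) : cos (y + 2 * IZR k * PI) = cos y.
Proof. rewrite cos_plus, sin_2kPI, cos_2kPI. ring. Qed.
Lemma sin_perZ (y : R) (k : Z) : sin (y + 2 * IZR k * PI) = sin y.
Proof. rewrite sin_plus, sin_2kPI, cos_2kPI. ring. Qed.

Lemma Cmod_polar (r t : R) : 0 <= r -> Cmod (r * cos t, r * sin t) = r.
Proof.
  intros Hr. unfold Cmod. cbn [fst snd].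
  replace ((r * cos t) ^ 2 + (r * sin t) ^ 2) with (r ^ 2).
  - apply sqrt_pow2; auto.
  - pose proof (sin2_cos2 t). unfold Rsqr in H. nra.
Qed.

Lemma polar_mult (r1 t1 r2 t2 : R) :
  Cmult (r1 * cos t1, r1 * sin t1) (r2 * cos t2, r2 * sin t2)
  = (r1 * r2 * cos (t1 + t2), r1 * r2 * sin (t1 + t2)).
Proof. unfold Cmult. cbn [fst snd]. rewrite cos_plus, sin_plus. f_equal; ring. Qed.

Lemma polar_pow (r t : R) (n : nat) :
  Defs.Cpow (r * cos t, r * sin t) n = (r ^ n * cos (INR n * t), r ^ n * sin (INR n * t)).
Proof.
  induction n as [|n IH].
  - simpl. rewrite Rmult_0_l, cos_0, sin_0. unfold RtoC. f_equal; ring.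
  - cbn [Defs.Cpow]. rewrite IH, polar_mult. rewrite S_INR.
    replace (t + INR n * t) with ((INR n + 1) * t) by ring. f_equal; simpl; ring.
Qed.

Definition Ep (x y : R) : C := (exp x * cos y, exp x * sin y).
Definition aa (x y : R) := 1 + exp x * cos y.
Definition bb (x y : R) := exp x * sin y.
Definition qq (x y : R) := aa x y ^ 2 + bb x y ^ 2.
Definition Rf (m : nat) (x y : R) := x + INR m / 2 * ln (qq x y).
Definition Th (m : nat) (x y : R) := y + INR m * atan (bb x y / aa x y).

Lemma aa_pos (x y : R) : x < 0 -> 0 < aa x y.
Proof.
  intros Hx. unfold aa. assert (exp x < 1) by (rewrite <- exp_0; apply exp_increasing; lra).
  pose proof (COS_bound y). pose proof (exp_pos x). nra.
Qed.

Lemma one_plus_Ep (x y : R) : x < 0 ->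
  Cplus (RtoC 1) (Ep x y) = (sqrt (qq x y) * cos (atan (bb x y / aa x y)),
                               sqrt (qq x y) * sin (atan (bb x y / aa x y))).
Proof.
  intros Hx. pose proof (aa_pos x y Hx) as Ha.
  assert (Hq : 0 < qq x y) by (unfold qq; nra).
  assert (Hs : sqrt (1 + (bb x y / aa x y)²) = sqrt (qq x y) / aa x y).
  { replace (1 + (bb x y / aa x y)²) with (qq x y / (aa x y ^ 2)).
    - rewrite sqrt_div_alt by nra. rewrite sqrt_pow2 by lra. reflexivity.
    - unfold qq, Rsqr. field. lra. }
  rewrite cos_atan, sin_atan, Hs.
  assert (0 < sqrt (qq x y)) by (apply sqrt_lt_R0; lra).
  unfold Ep, RtoC, Cplus. cbn [fst snd]. f_equal.
  - unfold aa in *. field. lra.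
  - unfold bb, aa in *. field. lra.
Qed.

Lemma fpoly_Ep (m : nat) (x y : R) : x < 0 ->
  fpoly (S m) (Ep x y) = (exp (Rf m x y) * cos (Th m x y), exp (Rf m x y) * sin (Th m x y)).
Proof.
  intros Hx. unfold fpoly. replace (S m - 1)%nat with m by lia.
  rewrite one_plus_Ep by auto. rewrite polar_pow.
  change (Ep x y) with (exp x * cos y, exp x * sin y). rewrite polar_mult.
  assert (Hq : 0 < qq x y) by (pose proof (aa_pos x y Hx); unfold qq; nra).
  assert (E : exp x * sqrt (qq x y) ^ m = exp (Rf m x y)).
  { unfold Rf. rewrite exp_plus. f_equal.
    rewrite <- (exp_ln (sqrt (qq x y) ^ m)).
    2: { apply pow_lt. apply sqrt_lt_R0; auto. }
    f_equal. rewrite ln_pow by (apply sqrt_lt_R0; auto).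
    rewrite <- (sqrt_sqrt (qq x y)) at 2 by lra.
    rewrite ln_mult by (apply sqrt_lt_R0; auto). field. }
  rewrite E. unfold Th. reflexivity.
Qed.

Lemma Cmod_Ep (x y : R) : Cmod (Ep x y) = exp x.
Proof.
  unfold Cmod, Ep. cbn [fst snd].
  replace ((exp x * cos y) ^ 2 + (exp x * sin y) ^ 2) with (exp x ^ 2).
  - apply sqrt_pow2. pose proof (exp_pos x); lra.
  - pose proof (sin2_cos2 y). unfold Rsqr in H. nra.
Qed.

Lemma Ep_surj (u : C) : u <> RtoC 0 -> exists x y, u = Ep x y /\ exp x = Cmod u.
Proof.
  intros Hu. destruct u as [ux uy].
  assert (Hr : 0 < Cmod (ux, uy)) by (apply Cmod_gt_0; auto).
  set (r := Cmod (ux,uy)) in *.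
  assert (Hr2 : r ^ 2 = ux ^ 2 + uy ^ 2).
  { unfold r, Cmod. cbn [fst snd]. rewrite pow2_sqrt; [auto| nra]. }
  set (c := ux / r).
  assert (Hc : -1 <= c <= 1).
  { unfold c. split.
    - apply Rmult_le_reg_r with r; auto. field_simplify; try lra. nra.
    - apply Rmult_le_reg_r with r; auto. field_simplify; try lra. nra. }
  assert (Hsq : sqrt (1 - c²) = Rabs uy / r).
  { replace (1 - c²) with ((Rabs uy / r) ^ 2).
    - apply sqrt_pow2. apply Rdiv_le_0_compat; [apply Rabs_pos|lra].
    - unfold c, Rsqr. replace ((Rabs uy / r)^2) with (Rabs uy ^ 2 / r ^ 2) by (field; lra).
      rewrite pow2_abs. apply Rmult_eq_reg_r with (r^2). 2: nra.
      field_simplify; try lra. }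
  exists (ln r).
  destruct (Rle_or_lt 0 uy) as [Hy|Hy].
  - exists (acos c). rewrite exp_ln by auto. split; auto.
    unfold Ep. rewrite exp_ln by auto. rewrite cos_acos by auto. rewrite sin_acos by auto.
    rewrite Hsq. rewrite Rabs_right by lra. unfold c. f_equal; field; lra.
  - exists (- acos c). rewrite exp_ln by auto. split; auto.
    unfold Ep. rewrite exp_ln by auto. rewrite cos_neg, sin_neg. rewrite cos_acos by auto. rewrite sin_acos by auto.
    rewrite Hsq. rewrite Rabs_left by lra. unfold c. f_equal; field; lra.
Qed.

Lemma hder (m : nat) (x2 y2 dx dy t : R) :
  0 < aa (x2+t*dx) (y2+t*dy) ->
  is_derive (fun t => dx * Rf m (x2+t*dx) (y2+t*dy) + dy * Th m (x2+t*dx) (y2+t*dy)) t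
   ((dx^2+dy^2) * (1 + INR m * (qq (x2+t*dx) (y2+t*dy) - aa (x2+t*dx) (y2+t*dy))
        / qq (x2+t*dx) (y2+t*dy))).
Proof.
  unfold Rf, Th, qq, aa, bb. intros Ha.
  auto_derive.
  - repeat split; try nra; lra.
  - remember (exp (x2 + t*dx)) as e. remember (cos (y2+t*dy)) as c. remember (sin (y2+t*dy)) as s.
    assert (H1 : (1 + e*c)^2 + (e*s)^2 <> 0) by nra.
    assert (H2 : 1 + (e*s/(1+e*c))^2 <> 0).
    { assert (0 <= (e*s/(1+e*c))^2) by apply pow2_ge_0. lra. }
    field. repeat split; try lra.
Qed.

Lemma N_nonneg (m : nat) (x y : R) : (1 <= m)%nat -> exp x <= / INR (S m) ->
  0 <= 1 + INR m * (qq x y - aa x y) / qq x y /\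
  (1 + INR m * (qq x y - aa x y) / qq x y = 0 -> exp x = / INR (S m) /\ cos y = -1).
Proof.
  intros Hm1 Hx. rewrite S_INR in *. pose proof (pos_INR m) as Hm.
  apply le_INR in Hm1. simpl in Hm1.
  set (r := exp x) in *. assert (Hr : 0 < r) by apply exp_pos.
  assert (HrD : r * (INR m + 1) <= 1).
  { apply Rmult_le_reg_r with (/ (INR m + 1)). apply Rinv_0_lt_compat; lra.
    field_simplify; lra. }
  assert (Hc := COS_bound y). pose proof (sin2_cos2 y) as Hp. unfold Rsqr in Hp.
  assert (Hq : qq x y = 1 + 2 * r * cos y + r ^ 2).
  { unfold qq, aa, bb. fold r. nra. }
  assert (Hq0 : 0 < qq x y).
  { rewrite Hq. replace (1 + 2 * r * cos y + r ^ 2) with ((1-r)^2 + 2*r*(1+cos y)) by ring.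
    assert (r < 1) by nra. nra. }
  assert (E : 1 + INR m * (qq x y - aa x y) / qq x y
            = (1 + (INR m + 2) * r * cos y + (INR m + 1) * r ^ 2) / qq x y).
  { unfold aa. fold r. field_simplify; try lra. rewrite Hq. field. lra. }
  rewrite E.
  assert (Hlow : (1 + (INR m + 2) * r * cos y + (INR m + 1) * r ^ 2)
     = (1 - r) * (1 - (INR m + 1) * r) + (INR m + 2) * r * (1 + cos y)) by ring.
  assert (H1 : 0 <= (1 - r) * (1 - (INR m + 1) * r)).
  { apply Rmult_le_pos; nra. }
  assert (H2 : 0 <= (INR m + 2) * r * (1 + cos y)).
  { apply Rmult_le_pos; [|lra]. nra. }
  split.
  - apply Rdiv_le_0_compat; lra.
  - intros H0.
    assert (Hn : 1 + (INR m + 2) * r * cos y + (INR m + 1) * r ^ 2 = 0).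
    { apply Rmult_eq_reg_r with (/ qq x y). rewrite Rmult_0_l. exact H0.
      apply Rinv_neq_0_compat. lra. }
    assert (Ha : (1 - r) * (1 - (INR m + 1) * r) = 0) by lra.
    assert (Hb : (INR m + 2) * r * (1 + cos y) = 0) by lra.
    split.
    + apply Rmult_integral in Ha. destruct Ha as [Ha|Ha].
      * exfalso. assert (r = 1) by lra. nra.
      * field_simplify; try lra. apply Rmult_eq_reg_r with (INR m + 1); try lra. field_simplify; lra.
    + apply Rmult_integral in Hb. destruct Hb as [Hb|Hb]; [|lra].
      exfalso. apply Rmult_integral in Hb. destruct Hb; lra.
Qed.

Lemma inj_disk (m : nat) (u v : C) : (1 <= m)%nat -> 0 < Cmod u -> Cmod u <= / INR (S m) ->
  Cmod v = / INR (S m) -> fpoly (S m) u = fpoly (S m) v -> u = v.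
Proof.
  intros Hm Hu0 Hu1 Hv H.
  assert (HD : 2 <= INR (S m)) by (replace 2 with (INR 2) by (simpl; ring); apply le_INR; lia).
  assert (Hun : u <> RtoC 0) by (intro E; rewrite E, Cmod_0 in Hu0; lra).
  assert (Hvn : v <> RtoC 0).
  { intro E; rewrite E, Cmod_0 in Hv. assert (0 < / INR (S m)) by (apply Rinv_0_lt_compat; lra). lra. }
  destruct (Ep_surj u Hun) as [x1 [y1 [Hu Hx1]]].
  destruct (Ep_surj v Hvn) as [x2 [y2 [Hv' Hx2]]].
  assert (Hx12 : x1 <= x2).
  { destruct (Rle_or_lt x1 x2) as [|Hlt]; auto. apply exp_increasing in Hlt. lra. }
  assert (Hx2n : x2 < 0).
  { destruct (Rle_or_lt 0 x2) as [Hle|]; auto. exfalso.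
    assert (1 <= exp x2) by (rewrite <- exp_0; destruct Hle as [Hle|Hle]; [apply Rlt_le, exp_increasing; auto| rewrite Hle; lra]).
    assert (/ INR (S m) <= / 2) by (apply Rinv_le_contravar; lra). lra. }
  subst u v. rewrite !fpoly_Ep in H by lra.
  injection H as Hre Him.
  set (R1 := Rf m x1 y1) in *. set (R2 := Rf m x2 y2) in *.
  set (T1 := Th m x1 y1) in *. set (T2 := Th m x2 y2) in *.
  assert (HR : R1 = R2).
  { apply exp_inv.
    assert (E : exp R1 ^ 2 = exp R2 ^ 2).
    { pose proof (sin2_cos2 T1). pose proof (sin2_cos2 T2). unfold Rsqr in *.
      replace (exp R1 ^ 2) with ((exp R1 * cos T1)^2 + (exp R1 * sin T1)^2) by nra.
      rewrite Hre, Him. nra. }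
    pose proof (exp_pos R1). pose proof (exp_pos R2). nra. }
  rewrite HR in Hre, Him.
  assert (He : exp R2 <> 0) by (pose proof (exp_pos R2); lra).
  apply Rmult_eq_reg_l in Hre; auto. apply Rmult_eq_reg_l in Him; auto.
  destruct (cos_sin_eq _ _ Hre Him) as [k Hk].
  set (y1' := y1 + 2 * IZR (- k) * PI).
  assert (EEp : Ep x1 y1' = Ep x1 y1) by (unfold Ep, y1'; rewrite cos_perZ, sin_perZ; reflexivity).
  assert (Eaa : aa x1 y1' = aa x1 y1) by (unfold aa, y1'; rewrite cos_perZ; reflexivity).
  assert (Ebb : bb x1 y1' = bb x1 y1) by (unfold bb, y1'; rewrite sin_perZ; reflexivity).
  assert (ERf : Rf m x1 y1' = R2).
  { rewrite <- HR. unfold R1, Rf, qq. rewrite Eaa, Ebb. reflexivity. }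
  assert (ETh : Th m x1 y1' = T2).
  { unfold Th. rewrite Eaa, Ebb. fold (Th m x1 y1). fold T1. unfold y1'.
    unfold T1, Th in Hk |- *. rewrite opp_IZR. lra. }
  rewrite <- EEp.
  destruct (Req_dec x1 x2) as [Ex|Nx]; destruct (Req_dec y1' y2) as [Ey|Ny];
    [rewrite Ex, Ey; reflexivity| | |]; exfalso.
  all: set (dx := x1 - x2); set (dy := y1' - y2).
  all: assert (Hd : 0 < dx^2 + dy^2) by
      (first [ assert (dy <> 0) by (unfold dy; lra) | assert (dx <> 0) by (unfold dx; lra)]; nra).
  all: set (h := fun t => dx * Rf m (x2+t*dx) (y2+t*dy) + dy * Th m (x2+t*dx) (y2+t*dy)).
  all: set (hd := fun t => (dx^2+dy^2) * (1 + INR m * (qq (x2+t*dx) (y2+t*dy) - aa (x2+t*dx) (y2+t*dy))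
        / qq (x2+t*dx) (y2+t*dy))).
  all: assert (Hh : h 0 = h 1) by
      (unfold h; replace (x2 + 0*dx) with x2 by ring; replace (y2 + 0*dy) with y2 by ring;
       replace (x2 + 1*dx) with x1 by (unfold dx; ring); replace (y2 + 1*dy) with y1' by (unfold dy; ring);
       rewrite ERf, ETh; reflexivity).
  all: assert (Hxt : forall t, 0 <= t -> exp (x2 + t*dx) <= / INR (S m)) by
      (intros t Ht; rewrite <- Hv, <- Hx2; destruct (Req_dec t 0) as [->|Htn];
       [right; f_equal; ring| destruct (Req_dec dx 0) as [Edx| Ndx];
        [rewrite Edx; right; f_equal; ring| left; apply exp_increasing; unfold dx in *; nra]]).
  all: assert (Hmvt : forall a b, 0 <= a < b -> exists c, h b - h a = hd c * (b - a) /\ a < c < b) by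
      (intros a b Hab; apply MVT_cor2; [lra|]; intros c Hc; apply is_derive_Reals; apply hder;
       apply aa_pos; assert (exp (x2 + c*dx) < 1) by
         (apply Rle_lt_trans with (/ INR (S m)); [apply Hxt; lra|];
          apply Rle_lt_trans with (/2); [apply Rinv_le_contravar; lra| lra]);
       rewrite <- exp_0 in H; destruct (Rle_or_lt 0 (x2 + c*dx)) as [Hq|Hq]; auto;
       exfalso; destruct Hq as [Hq|Hq]; [apply exp_increasing in Hq; lra| rewrite <- Hq in H; lra]).
  all: assert (Hhd : forall t, 0 <= t -> 0 <= hd t /\ (hd t = 0 -> exp (x2 + t*dx) = / INR (S m) /\ cos (y2 + t*dy) = -1)) by
      (intros t Ht; destruct (N_nonneg m (x2 + t*dx) (y2+t*dy) Hm (Hxt t Ht)) as [N1 N2]; unfold hd; split;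
       [apply Rmult_le_pos; lra| intros Z; apply N2; apply Rmult_integral in Z; destruct Z; [lra|auto]]).
  all: set (eps := Rmin (1/3) (PI / (2 * (Rabs dy + 1)))).
  all: assert (Heps : 0 < eps <= 1/3) by
      (unfold eps; split; [apply Rmin_pos; [lra| apply Rdiv_lt_0_compat; [apply PI_RGT_0| pose proof (Rabs_pos dy); lra]]| apply Rmin_l]).
  all: assert (Heps2 : 2 * eps * Rabs dy < PI) by
      (assert (eps <= PI / (2 * (Rabs dy + 1))) by apply Rmin_r; pose proof (Rabs_pos dy); pose proof PI_RGT_0;
       apply Rle_lt_trans with (2 * (PI / (2 * (Rabs dy + 1))) * Rabs dy); [nra|];
       apply Rmult_lt_reg_r with (Rabs dy + 1); [lra|]; field_simplify; nra).
  all: destruct (Hmvt 0 eps) as [c1 [E1 B1]]; [lra|].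
  all: destruct (Hmvt eps (2*eps)) as [c2 [E2 B2]]; [lra|].
  all: destruct (Hmvt (2*eps) 1) as [c3 [E3 B3]]; [lra|].
  all: destruct (Hhd c1) as [P1 Z1]; [lra|]; destruct (Hhd c2) as [P2 Z2]; [lra|]; destruct (Hhd c3) as [P3 Z3]; [lra|].
  all: assert (Hz1 : hd c1 = 0) by nra; assert (Hz2 : hd c2 = 0) by nra.
  all: destruct (Z1 Hz1) as [X1 C1]; destruct (Z2 Hz2) as [X2 C2].
  all: assert (Hdx0 : dx = 0) by
      (rewrite <- X2 in X1; apply exp_inv in X1; assert ((c1 - c2) * dx = 0) by lra;
       apply Rmult_integral in H; destruct H; lra).
  all: assert (Hcos : cos ((y2 + c2*dy) - (y2 + c1*dy)) = 1) by
      (rewrite cos_minus, C1, C2; pose proof (sin2_cos2 (y2 + c1*dy)); pose proof (sin2_cos2 (y2 + c2*dy));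
       unfold Rsqr in *; rewrite C1 in H; rewrite C2 in H0;
       assert (sin (y2 + c1*dy) = 0) by nra; assert (sin (y2 + c2*dy) = 0) by nra; nra).
  all: apply cos_eq_1_small in Hcos;
      [ replace (y2 + c2 * dy - (y2 + c1 * dy)) with ((c2 - c1) * dy) in Hcos by ring;
        apply Rmult_integral in Hcos; destruct Hcos; [lra|]; nra
      | replace (y2 + c2 * dy - (y2 + c1 * dy)) with ((c2 - c1) * dy) by ring;
        pose proof PI_RGT_0;
        assert (Rabs ((c2 - c1) * dy) < PI) by
          (rewrite Rabs_mult, Rabs_right by lra; apply Rle_lt_trans with (2*eps*Rabs dy); [|lra];
           apply Rmult_le_compat_r; [apply Rabs_pos|lra]);
        apply Rabs_def2 in H0; lra ].
Qed.

Notation CP := Defs.Cpow.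

Fixpoint Sx (n : nat) (U V : C) : C :=
  match n with O => RtoC 0 | S k => (U * Sx k U V + CP V k)%C end.
Fixpoint Tx (n : nat) (U V : C) : C :=
  match n with O => RtoC 0 | S k => (U * Tx k U V + RtoC (INR k) * CP V (k - 1))%C end.

Lemma S_id (n : nat) (U V : C) : (CP U n - CP V n = (U - V) * Sx n U V)%C.
Proof.
  induction n as [|n IH]; cbn [CP Sx].
  - ring.
  - replace (U * CP U n - V * CP V n)%C with (U * (CP U n - CP V n) + (U - V) * CP V n)%C by ring.
    rewrite IH. ring.
Qed.

Lemma CP_S (V : C) (n : nat) : CP V (S n) = (V * CP V n)%C.
Proof. reflexivity. Qed.

Lemma INR_S_C (n : nat) : RtoC (INR (S n)) = (RtoC (INR n) + 1)%C.
Proof. rewrite S_INR, RtoC_plus. reflexivity. Qed.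

Lemma ST (n : nat) (U V : C) :
  Sx n U V = (RtoC (INR n) * CP V (n - 1) + (U - V) * Tx n U V)%C.
Proof.
  induction n as [|n IH]; cbn [Sx Tx].
  - simpl. ring.
  - rewrite IH. rewrite INR_S_C. replace (S n - 1)%nat with n by lia.
    destruct n as [|k].
    + simpl. ring.
    + replace (S k - 1)%nat with k by lia. rewrite CP_S. ring.
Qed.

Lemma T_diag (n : nat) (V : C) :
  (RtoC 2 * V * Tx n V V = RtoC (INR n) * (RtoC (INR n) - 1) * CP V (n - 1))%C.
Proof.
  induction n as [|n IH]; cbn [Tx].
  - simpl. ring.
  - rewrite INR_S_C. replace (S n - 1)%nat with n by lia.
    replace (RtoC 2 * V * (V * Tx n V V + RtoC (INR n) * CP V (n - 1)))%C
      with (V * (RtoC 2 * V * Tx n V V) + RtoC 2 * RtoC (INR n) * (V * CP V (n-1)))%C by ring.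
    rewrite IH. destruct n as [|k].
    + simpl. ring.
    + replace (S k - 1)%nat with k by lia. rewrite CP_S. ring.
Qed.

Lemma fpoly_S (m : nat) (u : C) : fpoly (S m) u = (CP (1 + u) (S m) - CP (1 + u) m)%C.
Proof.
  unfold fpoly. replace (S m - 1)%nat with m by lia. rewrite CP_S. ring.
Qed.

Definition Dd (m : nat) (v u : C) : C := (Sx (S m) (1 + u) (1 + v) - Sx m (1 + u) (1 + v))%C.
Definition D0 (m : nat) (v : C) : C :=
  (RtoC (INR (S m)) * CP (1 + v) m - RtoC (INR m) * CP (1 + v) (m - 1))%C.
Definition Ed (m : nat) (v u : C) : C := (Tx (S m) (1 + u) (1 + v) - Tx m (1 + u) (1 + v))%C.

Lemma f_diff (m : nat) (u v : C) : (fpoly (S m) u - fpoly (S m) v = (u - v) * Dd m v u)%C.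
Proof.
  rewrite !fpoly_S. unfold Dd.
  replace (CP (1 + u) (S m) - CP (1 + u) m - (CP (1 + v) (S m) - CP (1 + v) m))%C
    with ((CP (1 + u) (S m) - CP (1 + v) (S m)) - (CP (1 + u) m - CP (1 + v) m))%C by ring.
  rewrite !S_id. ring.
Qed.

Lemma Dd_exp (m : nat) (u v : C) : Dd m v u = (D0 m v + (u - v) * Ed m v u)%C.
Proof.
  unfold Dd, D0, Ed. rewrite !ST. replace (S m - 1)%nat with m by lia. ring.
Qed.

Definition Bnd (h : C -> C) (a : C) := exists B, forall z, Cmod (z - a) <= 1 -> Cmod (h z) <= B.
Definition PL (h : C -> C) (a : C) := exists g, Bnd g a /\ forall z, h z = (h a + (z - a) * g z)%C.

Lemma PL_Bnd h a : PL h a -> Bnd h a.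
Proof.
  intros [g [[B HB] Hg]]. exists (Cmod (h a) + B). intros z Hz.
  rewrite Hg. eapply Rle_trans; [apply Cmod_triangle|]. rewrite Cmod_mult.
  apply Rplus_le_compat_l. specialize (HB z Hz). pose proof (Cmod_ge_0 (g z)).
  pose proof (Cmod_ge_0 (z - a)). nra.
Qed.

Lemma PL_const c a : PL (fun _ => c) a.
Proof. exists (fun _ => RtoC 0). split. exists 0. intros. rewrite Cmod_0. lra. intros. ring. Qed.

Lemma PL_id a : PL (fun z => z) a.
Proof. exists (fun _ => RtoC 1). split. exists 1. intros. rewrite Cmod_1. lra. intros. ring. Qed.

Lemma PL_plus h1 h2 a : PL h1 a -> PL h2 a -> PL (fun z => h1 z + h2 z)%C a.
Proof.
  intros [g1 [[B1 HB1] E1]] [g2 [[B2 HB2] E2]]. exists (fun z => g1 z + g2 z)%C. split.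
  - exists (B1 + B2). intros z Hz. eapply Rle_trans; [apply Cmod_triangle|].
    specialize (HB1 z Hz). specialize (HB2 z Hz). lra.
  - intros z. rewrite (E1 z), (E2 z). ring.
Qed.

Lemma PL_opp h a : PL h a -> PL (fun z => - h z)%C a.
Proof.
  intros [g [[B HB] E]]. exists (fun z => - g z)%C. split.
  - exists B. intros z Hz. rewrite Cmod_opp. auto.
  - intros z. rewrite (E z). ring.
Qed.

Lemma PL_mult h1 h2 a : PL h1 a -> PL h2 a -> PL (fun z => h1 z * h2 z)%C a.
Proof.
  intros H1 H2. pose proof (PL_Bnd _ _ H2) as [B2' HB2'].
  destruct H1 as [g1 [[B1 HB1] E1]]. destruct H2 as [g2 [[B2 HB2] E2]].
  exists (fun z => g1 z * h2 z + h1 a * g2 z)%C. split.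
  - exists (B1 * B2' + Cmod (h1 a) * B2). intros z Hz. eapply Rle_trans; [apply Cmod_triangle|].
    rewrite !Cmod_mult. specialize (HB1 z Hz). specialize (HB2 z Hz). specialize (HB2' z Hz).
    pose proof (Cmod_ge_0 (g1 z)). pose proof (Cmod_ge_0 (h2 z)). pose proof (Cmod_ge_0 (h1 a)).
    pose proof (Cmod_ge_0 (g2 z)). apply Rplus_le_compat.
    + apply Rmult_le_compat; auto.
    + apply Rmult_le_compat_l; auto.
  - intros z. rewrite (E1 z) at 1. rewrite (E2 z) at 1. rewrite <- (E2 z) at 1.
    rewrite (E2 z). ring.
Qed.

Lemma PL_Tx (n : nat) (V a : C) : PL (fun z => Tx n (1 + z) V) a.
Proof.
  induction n as [|n IH]; cbn [Tx].
  - apply PL_const.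
  - apply PL_plus; [|apply PL_const]. apply PL_mult; auto.
    apply PL_plus; [apply PL_const| apply PL_id].
Qed.

Lemma PL_Ed (m : nat) (v : C) : PL (Ed m v) v.
Proof.
  unfold Ed. apply PL_plus; [apply PL_Tx|]. apply PL_opp. apply PL_Tx.
Qed.

Definition Pr (l : list C) (z : C) : C := fold_right Cmult (RtoC 1) (map (fun w => z - w)%C l).

Lemma PL_Pr (l : list C) (a : C) : PL (Pr l) a.
Proof.
  induction l as [|w l IH]; unfold Pr; cbn [map fold_right].
  - apply PL_const.
  - apply PL_mult; auto. apply PL_plus; [apply PL_id| apply PL_const].
Qed.

Lemma zero_lemma (c a : C) (k : C -> C) :
  Bnd k a -> (forall z, z <> a -> c = ((z - a) * k z)%C) -> c = RtoC 0.
Proof.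
  intros [B HB] Hc. destruct (Ceq_dec c 0) as [|Hn]; auto. exfalso.
  apply Cmod_gt_0 in Hn.
  set (e := Rmin 1 (Cmod c / (2 * (Rabs B + 1)))).
  assert (He : 0 < e <= 1).
  { unfold e. split. apply Rmin_pos; [lra|]. apply Rdiv_lt_0_compat; [lra|]. pose proof (Rabs_pos B); lra.
    apply Rmin_l. }
  assert (He2 : e <= Cmod c / (2 * (Rabs B + 1))) by apply Rmin_r.
  set (z := (a + RtoC e)%C).
  assert (Hz : (z - a)%C = RtoC e) by (unfold z; ring).
  assert (Hza : z <> a).
  { intro E. rewrite E in Hz. replace (a - a)%C with (RtoC 0) in Hz by ring.
    apply RtoC_inj in Hz. lra. }
  specialize (Hc z Hza). rewrite Hz in Hc.
  assert (Hm : Cmod (z - a) <= 1) by (rewrite Hz, Cmod_R, Rabs_right; lra).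
  specialize (HB z Hm).
  assert (Cmod c <= e * B).
  { rewrite Hc, Cmod_mult, Cmod_R, Rabs_right by lra. apply Rmult_le_compat_l; lra. }
  assert (e * B <= e * Rabs B) by (apply Rmult_le_compat_l; [lra| apply Rle_abs]).
  pose proof (Rabs_pos B) as HB0.
  assert (H3 : e * (Rabs B + 1) <= Cmod c / (2 * (Rabs B + 1)) * (Rabs B + 1)) by (apply Rmult_le_compat_r; lra).
  replace (Cmod c / (2*(Rabs B+1)) * (Rabs B + 1)) with (Cmod c / 2) in H3 by (field; lra).
  pose proof (Rabs_pos B). nra.
Qed.

Lemma Pr_in_zero (w : C) (l : list C) : In w l -> Pr l w = RtoC 0.
Proof.
  induction l as [|a l IH]; intros H; [destruct H|]. unfold Pr in *. cbn [map fold_right].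
  destruct H as [->|H].
  - ring.
  - rewrite IH by auto. ring.
Qed.

Lemma Pr_extract (a : C) (l : list C) : In a l -> exists rest, forall z, Pr l z = ((z - a) * Pr rest z)%C.
Proof.
  induction l as [|b l IH]; intros H; [destruct H|]. destruct H as [->|H].
  - exists l. intros z. reflexivity.
  - destruct (IH H) as [rest Hr]. exists (b :: rest). intros z. unfold Pr in *. cbn [map fold_right].
    rewrite Hr. ring.
Qed.

Lemma Pr_app (l1 l2 : list C) (z : C) : Pr (l1 ++ l2) z = (Pr l1 z * Pr l2 z)%C.
Proof.
  induction l1 as [|a l1 IH]; unfold Pr in *; cbn [map fold_right app].
  - ring.
  - rewrite map_app in *. cbn [fold_right]. rewrite IH. ring.
Qed.

Lemma Pr_extract2 (a d0 : C) (l : list C) (i j : nat) :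
  (i < j)%nat -> (j < length l)%nat -> nth i l d0 = a -> nth j l d0 = a ->
  exists rest, forall z, Pr l z = ((z - a) * (z - a) * Pr rest z)%C.
Proof.
  intros Hij Hj Hi Hjj.
  destruct (nth_split l d0 (Nat.lt_trans _ _ _ Hij Hj)) as [l1 [l2 [E Hl1]]].
  rewrite Hi in E.
  assert (Hin : In a l2).
  { rewrite E in Hjj. rewrite app_nth2 in Hjj by lia. rewrite Hl1 in Hjj.
    replace (j - i)%nat with (S (j - i - 1)) in Hjj by lia. cbn [nth] in Hjj.
    rewrite <- Hjj. apply nth_In. rewrite E, length_app in Hj. cbn [length] in Hj. lia. }
  destruct (Pr_extract a l2 Hin) as [r2 Hr2].
  exists (l1 ++ r2). intros z. rewrite E, !Pr_app. unfold Pr at 2. cbn [map fold_right].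
  fold (Pr l2 z). rewrite Hr2. ring.
Qed.

Lemma Ccancel (a b c : C) : a <> RtoC 0 -> (a * b = a * c)%C -> b = c.
Proof.
  intros Ha H. replace b with (/ a * (a * b))%C by (field; auto).
  rewrite H. field. auto.
Qed.

Lemma single_root (m : nat) (v : C) (us : list C) :
  nontrivial_roots (S m) v us -> In v us -> D0 m v = RtoC 0.
Proof.
  intros [_ Hid] Hin. destruct (Pr_extract v us Hin) as [rest Hr].
  apply (zero_lemma _ v (fun z => Pr rest z - Ed m v z)%C).
  - apply PL_Bnd. apply PL_plus; [apply PL_Pr| apply PL_opp; apply PL_Ed].
  - intros z Hz. specialize (Hid z). fold (Pr us z) in Hid. rewrite f_diff, Hr in Hid.
    assert (Hz' : (z - v)%C <> RtoC 0) by (intro E; apply Hz; 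
      replace z with ((z - v) + v)%C by ring; rewrite E; ring).
    apply Ccancel in Hid; auto. rewrite Dd_exp in Hid.
    replace (D0 m v) with (D0 m v + (z - v) * Ed m v z - (z - v) * Ed m v z)%C by ring.
    rewrite Hid. ring.
Qed.

Lemma double_root (m : nat) (v : C) (us : list C) (i j : nat) :
  nontrivial_roots (S m) v us -> (i < j)%nat -> (j < length us)%nat ->
  nth i us (RtoC 0) = v -> nth j us (RtoC 0) = v -> Ed m v v = RtoC 0.
Proof.
  intros Hn Hij Hj Hi Hjj.
  assert (HD : D0 m v = RtoC 0).
  { apply (single_root m v us Hn). rewrite <- Hjj. apply nth_In. auto. }
  destruct Hn as [_ Hid].
  destruct (Pr_extract2 v (RtoC 0) us i j Hij Hj Hi Hjj) as [rest Hr].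
  destruct (PL_Ed m v) as [g [Hg Eg]].
  apply (zero_lemma _ v (fun z => Pr rest z - g z)%C).
  - destruct (PL_Bnd _ _ (PL_Pr rest v)) as [B1 H1]. destruct Hg as [B2 H2].
    exists (B1 + B2). intros z Hz. eapply Rle_trans; [apply Cmod_triangle|]. rewrite Cmod_opp.
    specialize (H1 z Hz). specialize (H2 z Hz). lra.
  - intros z Hz. specialize (Hid z). fold (Pr us z) in Hid. rewrite f_diff, Hr in Hid.
    assert (Hz' : (z - v)%C <> RtoC 0) by (intro E; apply Hz; 
      replace z with ((z - v) + v)%C by ring; rewrite E; ring).
    replace ((z - v) * (z - v) * (z - v) * Pr rest z)%C with ((z - v) * ((z - v) * (z - v) * Pr rest z))%C in Hid by ring.
    apply Ccancel in Hid; auto. rewrite Dd_exp, HD in Hid.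
    replace ((z - v) * (z - v) * Pr rest z)%C with ((z - v) * ((z - v) * Pr rest z))%C in Hid by ring.
    replace (RtoC 0 + (z - v) * Ed m v z)%C with ((z - v) * Ed m v z)%C in Hid by ring.
    apply Ccancel in Hid; auto. rewrite Eg in Hid.
    replace (Ed m v v) with (Ed m v v + (z - v) * g z - (z - v) * g z)%C by ring.
    rewrite Hid. ring.
Qed.

Lemma Cmod_CP (z : C) (n : nat) : Cmod (CP z n) = Cmod z ^ n.
Proof.
  induction n as [|n IH]; cbn [CP pow].
  - apply Cmod_1.
  - rewrite Cmod_mult, IH. reflexivity.
Qed.

Lemma CP_nonzero (z : C) (n : nat) : z <> RtoC 0 -> CP z n <> RtoC 0.
Proof.
  intros Hz E. apply Cmod_gt_0 in Hz. assert (Cmod (CP z n) = 0) by (rewrite E; apply Cmod_0).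
  rewrite Cmod_CP in H. pose proof (pow_lt _ n Hz). lra.
Qed.

Lemma Cmult_neq0 (a b : C) : a <> RtoC 0 -> b <> RtoC 0 -> (a * b)%C <> RtoC 0.
Proof.
  intros Ha Hb E. apply Cmod_gt_0 in Ha. apply Cmod_gt_0 in Hb.
  assert (Cmod (a*b) = 0) by (rewrite E; apply Cmod_0). rewrite Cmod_mult in H. nra.
Qed.

Lemma D0_nonzero (m : nat) (v : C) : (1 <= m)%nat -> (1 + v)%C <> RtoC 0 ->
  (1 + RtoC (INR (S m)) * v)%C <> RtoC 0 -> D0 m v <> RtoC 0.
Proof.
  intros Hm HV Hd. destruct m as [|k]; [lia|]. unfold D0.
  replace (S k - 1)%nat with k by lia. rewrite CP_S.
  replace (RtoC (INR (S (S k))) * ((1 + v) * CP (1 + v) k) - RtoC (INR (S k)) * CP (1 + v) k)%C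
    with (CP (1 + v) k * (RtoC (INR (S (S k))) * (1 + v) - RtoC (INR (S k))))%C by ring.
  apply Cmult_neq0; [apply CP_nonzero; auto|].
  rewrite (INR_S_C (S k)). rewrite (INR_S_C (S k)) in Hd.
  replace ((RtoC (INR (S k)) + 1) * (1 + v) - RtoC (INR (S k)))%C with (1 + (RtoC (INR (S k)) + 1) * v)%C by ring.
  auto.
Qed.

Lemma Ed_nonzero (m : nat) (v : C) : (1 <= m)%nat -> (1 + v)%C <> RtoC 0 ->
  (2 + RtoC (INR (S m)) * v)%C <> RtoC 0 -> Ed m v v <> RtoC 0.
Proof.
  intros Hm HV Hd E. destruct m as [|k]; [lia|].
  assert (H2 : (RtoC 2 * (1 + v) * Ed (S k) v v)%C = RtoC 0) by (rewrite E; ring).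
  unfold Ed in H2.
  replace (RtoC 2 * (1 + v) * (Tx (S (S k)) (1 + v) (1 + v) - Tx (S k) (1 + v) (1 + v)))%C
    with (RtoC 2 * (1 + v) * Tx (S (S k)) (1 + v) (1 + v) - RtoC 2 * (1 + v) * Tx (S k) (1 + v) (1 + v))%C in H2 by ring.
  rewrite !T_diag in H2.
  replace (S (S k) - 1)%nat with (S k) in H2 by lia. replace (S k - 1)%nat with k in H2 by lia.
  rewrite CP_S in H2. rewrite (INR_S_C (S k)) in H2, Hd.
  replace ((RtoC (INR (S k)) + 1) * (RtoC (INR (S k)) + 1 - 1) * ((1 + v) * CP (1 + v) k) -
      RtoC (INR (S k)) * (RtoC (INR (S k)) - 1) * CP (1 + v) k)%C
    with (RtoC (INR (S k)) * CP (1 + v) k * (2 + (RtoC (INR (S k)) + 1) * v))%C in H2 by ring.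
  revert H2. apply Cmult_neq0; auto. apply Cmult_neq0; [|apply CP_nonzero; auto].
  intro Z. apply RtoC_inj in Z. pose proof (pos_INR k). rewrite S_INR in Z. lra.
Qed.

Lemma exp_pow_n (x : R) (n : nat) : exp x ^ n = exp (INR n * x).
Proof.
  induction n as [|n IH].
  - simpl. rewrite Rmult_0_l, exp_0. reflexivity.
  - rewrite S_INR. simpl pow. rewrite IH. rewrite <- exp_plus. f_equal. ring.
Qed.

Lemma bern_weak (y : R) (n : nat) : 0 <= y -> 1 + INR n * (y - 1) <= y ^ n.
Proof.
  intros Hy. induction n as [|n IH].
  - simpl. lra.
  - rewrite S_INR. simpl pow. pose proof (pos_INR n).
    assert (y * (1 + INR n * (y - 1)) <= y * y ^ n) by (apply Rmult_le_compat_l; auto).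
    assert (0 <= INR n * (y-1)^2) by (apply Rmult_le_pos; [auto| apply pow2_ge_0]).
    nra.
Qed.

Lemma bern_strict (y : R) (m : nat) : 1 < y -> (1 <= m)%nat -> 1 + INR (S m) * (y - 1) < y ^ S m.
Proof.
  intros Hy Hm. simpl pow. pose proof (bern_weak y m ltac:(lra)).
  apply le_INR in Hm. simpl in Hm. rewrite S_INR.
  assert (y * (1 + INR m * (y - 1)) <= y * y ^ m) by (apply Rmult_le_compat_l; lra).
  assert (0 < INR m * (y-1)^2) by (apply Rmult_lt_0_compat; [lra| nra]).
  nra.
Qed.

Lemma exp_2ln (s : R) : 0 < s -> exp (2 * ln s) = s ^ 2.
Proof. intros. replace (2 * ln s) with (ln s + ln s) by ring. rewrite exp_plus, exp_ln by auto. ring. Qed.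

Section G.
Variables (m : nat) (p s1 : R).
Let D := INR m + 1.
Let a := p / (D - p).
Let be := 2 / INR m.
Let r1 := / D.

Definition FF (r : R) := exp (2 * a * ln r) * ((1 - p) + p * s1 ^ 2 * exp (be * (ln r1 - ln r)) - p * (1 - p) * r ^ 2).
Definition FF' (r : R) := exp (2 * a * ln r) * (2 * p * (1 - p) / (D - p)) / r *
     (1 - D / INR m * s1 ^ 2 * exp (be * (ln r1 - ln r)) - D * r ^ 2).

Hypothesis Hm : (1 <= m)%nat.
Hypothesis Hp : 0 < p < 1.

Lemma FF_der (r : R) : 0 < r -> is_derive FF r (FF' r).
Proof.
  intros Hr. assert (HmR : 1 <= INR m) by (apply le_INR in Hm; simpl in Hm; lra).
  unfold FF. auto_derive.
  - repeat split; auto.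
  - unfold FF'. replace (ln r1 + - ln r) with (ln r1 - ln r) by ring. unfold be, a, r1, D. field. repeat split; lra.
Qed.

Lemma k_neg (r : R) : r1 < r -> INR m / D <= s1 ->
  1 - D / INR m * s1 ^ 2 * exp (be * (ln r1 - ln r)) - D * r ^ 2 < 0.
Proof.
  intros Hr Hs. assert (HmR : 1 <= INR m) by (apply le_INR in Hm; simpl in Hm; lra).
  assert (HD : 0 < D) by (unfold D; lra).
  assert (Hr0 : 0 < r) by (unfold r1 in Hr; pose proof (Rinv_0_lt_compat D HD); lra).
  assert (HDr : 1 < D * r).
  { unfold r1 in Hr. apply Rmult_lt_compat_l with (r := D) in Hr; auto. rewrite Rinv_r in Hr; lra. }
  set (y := exp (be * ln (D * r))).
  assert (Hy : 1 < y).
  { unfold y. rewrite <- exp_0. apply exp_increasing. apply Rmult_lt_0_compat.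
    unfold be. apply Rdiv_lt_0_compat; lra. rewrite <- ln_1. apply ln_increasing; lra. }
  assert (HE : exp (be * (ln r1 - ln r)) = / y).
  { unfold y, r1. rewrite ln_Rinv by auto. rewrite ln_mult by lra. rewrite <- exp_Ropp. f_equal. ring. }
  assert (Hym : y ^ m = (D * r) ^ 2).
  { unfold y. rewrite exp_pow_n. rewrite <- exp_2ln by lra. f_equal. unfold be. field. lra. }
  rewrite HE.
  assert (Hs2 : (INR m / D) ^ 2 <= s1 ^ 2).
  { apply pow_incr. split; auto. apply Rdiv_le_0_compat; lra. }
  assert (HB := bern_strict y m Hy Hm). simpl pow in HB. rewrite Hym in HB.
  replace (INR (S m)) with D in HB by (unfold D; rewrite S_INR; ring).
  assert (Hyp : 0 < / y) by (apply Rinv_0_lt_compat; lra).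
  assert (D / INR m * s1 ^ 2 * / y >= D / INR m * (INR m / D) ^ 2 * / y).
  { apply Rle_ge. apply Rmult_le_compat_r; [lra|]. apply Rmult_le_compat_l; auto.
    apply Rdiv_le_0_compat; lra. }
  assert (1 - D / INR m * (INR m / D) ^ 2 * / y - D * r ^ 2 < 0).
  { replace (1 - D / INR m * (INR m / D) ^ 2 * / y - D * r ^ 2) with
      ((D * y - (INR m + y * (D * r) ^ 2)) / (D * y)) by (field; lra).
    assert (Hn : D*y - (INR m + y*(D*r)^2) < 0).
    { assert (D * (y - 1) = D * y - D) by ring. unfold D at 3 in H0. lra. }
    assert (0 < /(D*y)) by (apply Rinv_0_lt_compat; nra).
    unfold Rdiv. nra. }
  lra.
Qed.

Lemma FF_decr (r2 : R) : r1 < r2 -> INR m / D <= s1 -> FF r2 < FF r1.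
Proof.
  intros Hr Hs. assert (HmR : 1 <= INR m) by (apply le_INR in Hm; simpl in Hm; lra).
  assert (HD : 0 < D) by (unfold D; lra).
  assert (Hr1 : 0 < r1) by (unfold r1; apply Rinv_0_lt_compat; auto).
  destruct (MVT_cor2 FF FF' r1 r2 Hr) as [c [Ec Hc]].
  { intros c Hc. apply is_derive_Reals. apply FF_der. lra. }
  assert (Hk : 1 - D / INR m * s1 ^ 2 * exp (be * (ln r1 - ln c)) - D * c ^ 2 < 0) by (apply k_neg; lra).
  assert (HX : 0 < exp (2 * a * ln c) * (2 * p * (1 - p) / (D - p)) / c).
  { pose proof (exp_pos (2 * a * ln c)). unfold Rdiv. apply Rmult_lt_0_compat; [|apply Rinv_0_lt_compat; lra].
    apply Rmult_lt_0_compat; auto. apply Rmult_lt_0_compat; [nra|]. apply Rinv_0_lt_compat. unfold D; lra. }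
  assert (FF' c < 0) by (unfold FF'; nra).
  nra.
Qed.
End G.

Lemma Cmod_sq (z : C) : Cmod z ^ 2 = fst z ^ 2 + snd z ^ 2.
Proof. unfold Cmod. rewrite pow2_sqrt; [reflexivity|]. nra. Qed.

Lemma onep_sq (p : R) (z : C) :
  Cmod (Cplus (RtoC 1) (Cmult (RtoC p) z)) ^ 2
  = (1 - p) + p * Cmod (Cplus (RtoC 1) z) ^ 2 - p * (1 - p) * Cmod z ^ 2.
Proof.
  rewrite !Cmod_sq. destruct z as [x y]. unfold Cplus, Cmult, RtoC. cbn [fst snd]. ring.
Qed.

Lemma RePsi_lt (m : nat) (p : R) (v w : C) : (1 <= m)%nat -> 0 < p < 1 ->
  Cmod v = / (INR m + 1) -> / (INR m + 1) < Cmod w ->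
  INR m / (INR m + 1) <= Cmod (Cplus (RtoC 1) v) -> 0 < Cmod (Cplus (RtoC 1) w) ->
  0 < Cmod (Cplus (RtoC 1) (Cmult (RtoC p) v)) ->
  Cmod w * Cmod (Cplus (RtoC 1) w) ^ m = Cmod v * Cmod (Cplus (RtoC 1) v) ^ m ->
  Rbar_lt (RePsi p (S m) v) (RePsi p (S m) w).
Proof.
  intros Hm Hp Hv Hw Hs1 Hs2 Hpv Heq.
  assert (HmR : 1 <= INR m) by (apply le_INR in Hm; simpl in Hm; lra).
  set (D := INR m + 1) in *.
  assert (HD : 0 < / D) by (apply Rinv_0_lt_compat; unfold D; lra).
  set (s1 := Cmod (Cplus (RtoC 1) v)) in *. set (s2 := Cmod (Cplus (RtoC 1) w)) in *.
  assert (Hs1p : 0 < s1).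
  { apply Rlt_le_trans with (INR m / D); auto. apply Rdiv_lt_0_compat; unfold D; lra. }
  set (a := p / (D - p)).
  assert (Hdec := FF_decr m p s1 Hm Hp (Cmod w) Hw Hs1).
  assert (E1 : FF m p s1 (/ D) = exp (2 * a * ln (Cmod v)) * Cmod (Cplus (RtoC 1) (Cmult (RtoC p) v)) ^ 2).
  { unfold FF. rewrite onep_sq. fold s1. rewrite Hv. unfold D. fold D. fold a.
    replace (ln (/ D) - ln (/ D)) with 0 by ring. rewrite Rmult_0_r, exp_0. ring. }
  assert (Hlw : ln (Cmod w) + INR m * ln s2 = ln (/ D) + INR m * ln s1).
  { rewrite <- !ln_pow by auto. rewrite <- !ln_mult; try apply pow_lt; auto; try lra.
    rewrite Heq, Hv. reflexivity. }
  assert (E2 : FF m p s1 (Cmod w) = exp (2 * a * ln (Cmod w)) * Cmod (Cplus (RtoC 1) (Cmult (RtoC p) w)) ^ 2).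
  { unfold FF. rewrite onep_sq. fold s2. unfold D. fold D. fold a. f_equal. f_equal. f_equal.
    rewrite <- (exp_2ln s2), <- (exp_2ln s1) by auto. rewrite Rmult_assoc, <- exp_plus.
    f_equal. f_equal. apply Rmult_eq_reg_l with (INR m). 2: lra.
    field_simplify; try lra. }
  change (/ (INR m + 1)) with (/ D) in Hdec. rewrite E1, E2 in Hdec.
  unfold RePsi.
  destruct (Req_EM_T (Cmod v * Cmod (Cplus (RtoC 1) (Cmult (RtoC p) v))) 0) as [Z|NZ].
  { exfalso. rewrite Hv in Z. apply Rmult_integral in Z. lra. }
  destruct (Req_EM_T (Cmod w * Cmod (Cplus (RtoC 1) (Cmult (RtoC p) w))) 0) as [Z'|NZ'].
  { simpl. auto. }
  cbn [Rbar_lt].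
  assert (Hw0 : 0 < Cmod w) by lra.
  assert (Hpw : 0 < Cmod (Cplus (RtoC 1) (Cmult (RtoC p) w))).
  { destruct (Cmod_ge_0 (Cplus (RtoC 1) (Cmult (RtoC p) w))) as [|Z]; auto.
    exfalso. apply NZ'. rewrite <- Z. ring. }
  apply ln_increasing in Hdec.
  2: { apply Rmult_lt_0_compat; [apply exp_pos| apply pow_lt; auto]. }
  rewrite !ln_mult in Hdec; try apply exp_pos; try (apply pow_lt; auto).
  rewrite !ln_exp, !ln_pow in Hdec by auto. simpl INR in Hdec.
  replace (INR (S m)) with D by (unfold D; rewrite S_INR; ring). fold a. lra.
Qed.

Lemma Cmod_fst_le (z : C) : Rabs (fst z) <= Cmod z.
Proof. eapply Rle_trans; [apply Rmax_l| apply Rmax_Cmod]. Qed.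

Lemma Cmod_fpoly (m : nat) (z : C) : Cmod (fpoly (S m) z) = Cmod z * Cmod (Cplus (RtoC 1) z) ^ m.
Proof. unfold fpoly. replace (S m - 1)%nat with m by lia. rewrite Cmod_mult, Cmod_CP. reflexivity. Qed.

Lemma fpoly_zero (m : nat) : fpoly (S m) (RtoC 0) = RtoC 0.
Proof. unfold fpoly. ring. Qed.

Lemma one_dv (D : R) (v : C) : D <> 0 -> (1 + RtoC D * v)%C = RtoC 0 -> v = RtoC (-1 / D).
Proof.
  intros HD E. destruct v as [x y]. unfold Cplus, Cmult, RtoC in *. cbn [fst snd] in *.
  injection E as E1 E2. f_equal.
  - apply Rmult_eq_reg_l with D; auto. field_simplify; auto. lra.
  - apply Rmult_eq_reg_l with D; auto. lra.
Qed.

Theorem proposition5p9 (p : R) (d : nat) (hp : 0 < p < 1) (hd : (2 <= d)%nat) :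
  exists r th : R -> R,
    encircling_origin r th /\
    (exists t0, 0 <= t0 <= 1 /\ polar_pt r th t0 = RtoC (- 1 / INR d)) /\
    forall t, 0 <= t <= 1 ->
      forall us : list C, nontrivial_roots d (polar_pt r th t) us ->
        exists j : nat, (j < d - 1)%nat /\
          forall i : nat, (i < d - 1)%nat ->
            (i <> j \/ polar_pt r th t <> RtoC (- 1 / INR d)) ->
            Rbar_lt (RePsi p d (polar_pt r th t)) (RePsi p d (nth i us (RtoC 0))).
Proof.
  destruct d as [|m]; [lia|]. assert (Hm : (1 <= m)%nat) by lia.
  assert (HmR : 1 <= INR m) by (apply le_INR in Hm; simpl in Hm; lra).
  assert (HD : INR (S m) = INR m + 1) by apply S_INR.
  assert (HDp : 0 < / INR (S m)) by (apply Rinv_0_lt_compat; lra).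
  assert (HD1 : / INR (S m) <= / 2) by (apply Rinv_le_contravar; lra).
  exists (fun _ => / INR (S m)), (fun t => PI + 2 * PI * t).
  split; [|split].
  -
    split; [|split; [reflexivity|split]].
    + intros t Ht. split; [apply continuous_const|split; [|auto]].
      apply (ex_derive_continuous (K := R_AbsRing) (V := R_NormedModule)). auto_derive. auto.
    + ring.
    + intros s t Hs Ht E. unfold polar_pt in E. injection E as E1 E2.
      assert (Hr0 : / INR (S m) <> 0) by (intro; lra).
      apply Rmult_eq_reg_l in E1; auto. apply Rmult_eq_reg_l in E2; auto.
      assert (Hc : cos ((PI + 2 * PI * s) - (PI + 2 * PI * t)) = 1).
      { rewrite cos_minus, E1, E2. pose proof (sin2_cos2 (PI + 2 * PI * t)). unfold Rsqr in H. lra. }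
      apply cos_eq_1_small in Hc.
      * pose proof PI_RGT_0. nra.
      * pose proof PI_RGT_0. nra.
  - exists 0. split; [lra|]. unfold polar_pt.
    replace (PI + 2 * PI * 0) with PI by ring. rewrite cos_PI, sin_PI. unfold RtoC. f_equal; field; lra.
  - intros t Ht us Hus.
    set (v := polar_pt (fun _ => / INR (S m)) (fun t0 => PI + 2 * PI * t0) t) in *.
    assert (Hv : Cmod v = / INR (S m)) by (unfold v, polar_pt; apply Cmod_polar; lra).
    assert (Hvx : Rabs (fst v) <= / INR (S m)) by (rewrite <- Hv; apply Cmod_fst_le).
    assert (Hvx' : - / INR (S m) <= fst v <= / INR (S m)).
    { split; [apply Ropp_le_cancel; rewrite Ropp_involutive|];
      eapply Rle_trans; [| apply Hvx| |apply Hvx]; [rewrite <- Rabs_Ropp|]; apply Rle_abs. }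
    assert (Hinv : / INR (S m) = / (INR m + 1)) by (rewrite HD; reflexivity).
    assert (Hs1 : INR m / (INR m + 1) <= Cmod (Cplus (RtoC 1) v)).
    { eapply Rle_trans; [|apply Cmod_fst_le]. eapply Rle_trans; [|apply Rle_abs].
      cbn [fst Cplus RtoC]. replace (INR m / (INR m + 1)) with (1 - / (INR m + 1)) by (field; lra).
      rewrite <- Hinv. lra. }
    assert (Hpv : 0 < Cmod (Cplus (RtoC 1) (Cmult (RtoC p) v))).
    { eapply Rlt_le_trans; [|apply Cmod_fst_le]. eapply Rlt_le_trans; [|apply Rle_abs].
      destruct v as [vx vy]. cbn [fst snd Cplus Cmult RtoC] in *. nra. }
    assert (HV0 : Cplus (RtoC 1) v <> RtoC 0).
    { intro Z. rewrite Z, Cmod_0 in Hs1. assert (0 < INR m / (INR m + 1)) by (apply Rdiv_lt_0_compat; lra). lra. }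
    assert (Hv0 : v <> RtoC 0) by (intro Z; rewrite Z, Cmod_0 in Hv; lra).
    assert (Hfv : fpoly (S m) v <> RtoC 0).
    { unfold fpoly. replace (S m - 1)%nat with m by lia. apply Cmult_neq0; auto. apply CP_nonzero; auto. }
    destruct Hus as [Hlen Hid]. replace (S m - 1)%nat with m in * by lia.
    assert (Hus : nontrivial_roots (S m) v us) by (split; [replace (S m - 1)%nat with m by lia|]; auto).
    assert (Hnz : INR (S m) <> 0) by lra.
    assert (Key : forall i, (i < m)%nat -> nth i us (RtoC 0) <> v ->
              Rbar_lt (RePsi p (S m) v) (RePsi p (S m) (nth i us (RtoC 0)))).
    { intros i Hi Nwv. set (w := nth i us (RtoC 0)) in *.
      assert (Hin : In w us) by (apply nth_In; lia).
      assert (Hfw : fpoly (S m) w = fpoly (S m) v).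
      { specialize (Hid w). fold (Pr us w) in Hid. rewrite Pr_in_zero in Hid by auto.
        replace (fpoly (S m) w) with ((fpoly (S m) w - fpoly (S m) v) + fpoly (S m) v)%C by ring.
        rewrite Hid. ring. }
      assert (Hw0 : 0 < Cmod w).
      { apply Cmod_gt_0. intro Z. apply Hfv. rewrite <- Hfw, Z. apply fpoly_zero. }
      assert (Hw1 : / INR (S m) < Cmod w).
      { destruct (Rlt_or_le (/ INR (S m)) (Cmod w)) as [|Hle]; auto. exfalso. apply Nwv.
        apply (inj_disk m w v Hm Hw0 Hle Hv Hfw). }
      assert (Hcm := f_equal Cmod Hfw). rewrite !Cmod_fpoly in Hcm.
      assert (Hw2 : 0 < Cmod (Cplus (RtoC 1) w)).
      { apply Cmod_gt_0. intro Z. rewrite Z, Cmod_0 in Hcm. rewrite pow_i in Hcm by lia.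
        rewrite Rmult_0_r in Hcm. apply Hfv. apply Cmod_eq_0. rewrite Cmod_fpoly. lra. }
      apply (RePsi_lt m p v w Hm hp); auto; rewrite <- Hinv; auto. }
    destruct (classic (exists i, (i < m)%nat /\ nth i us (RtoC 0) = v)) as [[j [Hj Hjv]]|Hno].
    + exists j. split; auto. intros i Hi Hor.
      set (w := nth i us (RtoC 0)).
      destruct (Ceq_dec w v) as [Ewv|Nwv].
      * exfalso. destruct (Ceq_dec v (RtoC (-1 / INR (S m)))) as [Ev|Nv].
        -- destruct Hor as [Hij|Hc]; [|contradiction].
           assert (Ed m v v = RtoC 0).
           { destruct (Nat.lt_total i j) as [Hl|[Hl|Hl]]; [| lia |].
             - apply (double_root m v us i j Hus Hl); [lia|auto|auto].
             - apply (double_root m v us j i Hus Hl); [lia|auto|auto]. }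
           revert H. apply Ed_nonzero; auto. rewrite Ev.
           intro Z. rewrite HD in Z. unfold Cplus, Cmult, RtoC in Z. injection Z as Z1 Z2.
           assert ((INR m + 1) * (-1 / (INR m + 1)) = -1) by (field; lra). lra.
        -- apply (D0_nonzero m v Hm HV0). 
           ++ intro Z. apply Nv. apply one_dv; auto.
           ++ apply (single_root m v us Hus). rewrite <- Ewv. apply nth_In. lia.
      * apply Key; auto.
    + exists 0%nat. split; [lia|]. intros i Hi Hor.
      apply Key; auto. intro E. apply Hno. exists i. auto.
Qed.
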